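(* Let $\mathbf{F}$ be an $S$-sorted CCC freely generated by a family of morphisms $\{f_i\}_{i\in I}$, let $p:\mathbf{F}\to\mathbf{C}$ be a morphism of $S$-sorted CCCs, and let $D$ be a cartesian closed natural system on $\mathbf{C}$, regarded as a natural system on $\mathbf{F}$ via $p$. Let $\tilde C^0_{\mathrm{BW}}(\mathbf{F};D)$ be the subgroup of $\ker\big(\delta:C^1_{\mathrm{BW}}(\mathbf{F};D)\to C^2_{\mathrm{BW}}(\mathbf{F};D)\big)$ consisting of those $\phi$ with $\phi(f_i)=0$ for all $i\in I$. Then \[ \tilde C^0_{\mathrm{BW}}(\mathbf{F};D)\oplus\mathrm{Der}^{\mathbf{CCC}_S}(\mathbf{F};D)\cong\ker\big(\delta:C^1_{\mathrm{BW}}(\mathbf{F};D)\to C^2_{\mathrm{BW}}(\mathbf{F};D)\big). \]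
   Context: $\mathsf{BiMag}_S$ is the set of formal expressions generated from the elements of $S$ and $1$ by $X\times Y$ and $Y^X$. An $S$-sorted CCC is a CCC with object set $\mathsf{BiMag}_S$ and a cartesian closed identity-on-objects functor $\iota$ from $\mathbf{CFam}_S$, the free CCC on object set $\mathsf{BiMag}_S$ with no generating morphisms (so projections $\pi_i$ and evaluations $\mathrm{ev}^Y_Z:Z^Y\times Y\to Z$ are specified); morphisms of $S$-sorted CCCs are functors $F$ with $F\circ\iota=\iota'$. The $S$-sorted CCC freely generated by $\{f_i:X_i\to Y_i\}$ has morphisms generated from the $f_i$, identities, $!_X$, $\pi_i$, $\mathrm{ev}$ by composition, pairing and currying $\lambda$ modulo the category, product and exponential laws. A natural system on a category is a functor $D$ from its category of factorizations (objects: morphisms $f$; morphisms $f\to g$: pairs $(a,b)$ with $bfa=g$) to $\mathbf{Ab}$; $D_f=D(f)$, $a_*=D(1,a):D_f\to D_{af}$, $a^*=D(a,1):D_g\to D_{ga}$; via $p$, $D$ gives the natural system $f\mapsto D_{p(f)}$ on $\mathbf{F}$. $D$ is cartesian if $D_f\to\prod_kD_{\pi_kf}$, $\xi\mapsto(\pi_{k*}\xi)$ is an isomorphism for every $f:X\to X_1\times\dots\times X_n$; cartesian closed if moreover for each $f:X\times Y\to Z$ the map $D_{\lambda f}\to D_f$, $\xi\mapsto\mathrm{ev}^Y_{Z*}\phi_{\lambda f}(\xi,0)$ is an isomorphism, where $\phi_g:D_g\times D_{\pi_2}\to D_{g\times1_Y}$ is $\pi_1^*\times1$ followed by the inverse of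 the cartesian isomorphism $D_{g\times1_Y}\to D_{g\pi_1}\times D_{\pi_2}$. $C^1_{\mathrm{BW}}(\mathbf{F};D)$ is the group of functions $\phi$ assigning to each morphism $\lambda$ of $\mathbf{F}$ an element $\phi(\lambda)\in D_\lambda$; $C^2_{\mathrm{BW}}$ assigns to each composable pair $(\lambda_1,\lambda_2)$ an element of $D_{\lambda_1\lambda_2}$, and $(\delta\phi)(\lambda_1,\lambda_2)=\lambda_{1*}\phi(\lambda_2)-\phi(\lambda_1\lambda_2)+\lambda_2^*\phi(\lambda_1)$. The trivial extension $D\rtimes\mathbf{C}$ has $\mathrm{Hom}(X,Y)=\coprod_{f:X\to Y}D_f$ with composition $\xi\circ\eta=f_*\eta+g^*\xi$, and is an $S$-sorted CCC with specified projections/evaluations the zero elements; $\mathrm{Der}^{\mathbf{CCC}_S}(\mathbf{F};D)$ is the group of morphisms $s:\mathbf{F}\to D\rtimes\mathbf{C}$ of $S$-sorted CCCs lifting $p$. *)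

(* Defs.v *)
From HB Require Import structures.
From mathcomp Require Import all_boot all_algebra.
Set Implicit Arguments.
Unset Strict Implicit.
Unset Printing Implicit Defensive.
Import GRing.Theory.
Local Open Scope ring_scope.

(* BExp Y Z denotes the exponential object Z^Y.                         *)
Inductive BiMag (S : Type) : Type :=
  | BSort of S
  | BOne
  | BProd of BiMag S & BiMag S
  | BExp of BiMag S & BiMag S.
Arguments BSort {S} s.
Arguments BOne {S}.
Arguments BProd {S} X Y.
Arguments BExp {S} Y Z.

Record SCCCData (S : Type) := {
  chom : BiMag S -> BiMag S -> Type;
  cid : forall X, chom X X;
  ccomp : forall X Y Z, chom Y Z -> chom X Y -> chom X Z;
  cbang : forall X, chom X BOne;
  cpr1 : forall X Y, chom (BProd X Y) X;
  cpr2 : forall X Y, chom (BProd X Y) Y;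
  cpair : forall X Y Z, chom X Y -> chom X Z -> chom X (BProd Y Z);
  cev : forall Y Z, chom (BProd (BExp Y Z) Y) Z;
  ccur : forall X Y Z, chom (BProd X Y) Z -> chom X (BExp Y Z) }.
Arguments chom {S} s X Y.
Arguments cid {S s} X.
Arguments ccomp {S s X Y Z} g f.
Arguments cbang {S s} X.
Arguments cpr1 {S s} X Y.
Arguments cpr2 {S s} X Y.
Arguments cpair {S s X Y Z} f g.
Arguments cev {S s} Y Z.
Arguments ccur {S s X Y Z} f.

Definition ctimes1 {S} {C : SCCCData S} {X W : BiMag S} (Y : BiMag S)
  (g : chom C X W) : chom C (BProd X Y) (BProd W Y) :=
  cpair (ccomp g (cpr1 X Y)) (cpr2 X Y).

Record SCCCAxioms S (C : SCCCData S) : Prop := {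
  ax_assoc : forall X Y Z W (h : chom C Z W) (g : chom C Y Z) (f : chom C X Y),
      ccomp h (ccomp g f) = ccomp (ccomp h g) f;
  ax_idl : forall X Y (f : chom C X Y), ccomp (cid Y) f = f;
  ax_idr : forall X Y (f : chom C X Y), ccomp f (cid X) = f;
  ax_bang : forall X (f : chom C X BOne), f = cbang X;
  ax_pr1 : forall X Y Z (f : chom C X Y) (g : chom C X Z),
      ccomp (cpr1 Y Z) (cpair f g) = f;
  ax_pr2 : forall X Y Z (f : chom C X Y) (g : chom C X Z),
      ccomp (cpr2 Y Z) (cpair f g) = g;
  ax_pair_eta : forall X Y Z (h : chom C X (BProd Y Z)),
      cpair (ccomp (cpr1 Y Z) h) (ccomp (cpr2 Y Z) h) = h;
  ax_ev : forall X Y Z (f : chom C (BProd X Y) Z),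
      ccomp (cev Y Z) (ctimes1 Y (ccur f)) = f;
  ax_cur_eta : forall X Y Z (h : chom C X (BExp Y Z)),
      ccur (ccomp (cev Y Z) (ctimes1 Y h)) = h }.

Record SCCC (S : Type) := { sdata :> SCCCData S; sax : SCCCAxioms sdata }.

Record SCCCMor S (F G : SCCC S) := {
  fmap : forall X Y, chom F X Y -> chom G X Y;
  fmap_id : forall X, fmap (cid X) = cid X;
  fmap_comp : forall X Y Z (g : chom F Y Z) (f : chom F X Y),
      fmap (ccomp g f) = ccomp (fmap g) (fmap f);
  fmap_bang : forall X, fmap (cbang X) = cbang X;
  fmap_pr1 : forall X Y, fmap (cpr1 X Y) = cpr1 X Y;
  fmap_pr2 : forall X Y, fmap (cpr2 X Y) = cpr2 X Y;
  fmap_ev : forall Y Z, fmap (cev Y Z) = cev Y Z;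
  fmap_pair : forall X Y Z (f : chom F X Y) (g : chom F X Z),
      fmap (cpair f g) = cpair (fmap f) (fmap g);
  fmap_cur : forall X Y Z (f : chom F (BProd X Y) Z),
      fmap (ccur f) = ccur (fmap f) }.
Arguments fmap {S F G} s {X Y} _.

Definition IsFreeOn S (F : SCCC S) (I : Type) (Xs Ys : I -> BiMag S)
  (gens : forall i, chom F (Xs i) (Ys i)) : Prop :=
  forall (G : SCCC S) (g : forall i, chom G (Xs i) (Ys i)),
    exists H : SCCCMor F G,
      (forall i, fmap H (gens i) = g i) /\
      (forall H' : SCCCMor F G, (forall i, fmap H' (gens i) = g i) ->
         forall X Y (u : chom F X Y), fmap H' u = fmap H u).

(* Natural systems: functors from the category of factorizations to Ab. *)
(* A morphism f -> g is a pair (a,b) with b o f o a = g; nact gives      *)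
(* D(a,b) : D_f -> D_g (the proof argument records b o f o a = g).       *)
Record NatSys S (C : SCCC S) := {
  ns : forall X Y, chom C X Y -> zmodType;
  nact : forall X Y X' Y' (f : chom C X Y) (g : chom C X' Y')
      (a : chom C X' X) (b : chom C Y Y'),
      ccomp b (ccomp f a) = g -> ns f -> ns g;
  nact_add : forall X Y X' Y' (f : chom C X Y) (g : chom C X' Y')
      (a : chom C X' X) (b : chom C Y Y') (H : ccomp b (ccomp f a) = g)
      (x y : ns f),
      nact H (x + y) = nact H x + nact H y;
  nact_id : forall X Y (f : chom C X Y)
      (H : ccomp (cid Y) (ccomp f (cid X)) = f) (x : ns f),
      nact H x = x;
  nact_comp : forall X Y X' Y' X'' Y'' (f : chom C X Y) (g : chom C X' Y')
      (h : chom C X'' Y'') (a : chom C X' X) (b : chom C Y Y')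
      (a' : chom C X'' X') (b' : chom C Y' Y'')
      (H1 : ccomp b (ccomp f a) = g) (H2 : ccomp b' (ccomp g a') = h)
      (H3 : ccomp (ccomp b' b) (ccomp f (ccomp a a')) = h) (x : ns f),
      nact H2 (nact H1 x) = nact H3 x }.
Arguments ns {S C} n {X Y} _.
Arguments nact {S C} n {X Y X' Y' f g a b} _ _.

Section NatSysOps.
Variables (S : Type) (C : SCCC S) (D : NatSys C).

Lemma push_proof X Y Z (f : chom C X Y) (a : chom C Y Z) (g : chom C X Z)
  (e : ccomp a f = g) : ccomp a (ccomp f (cid X)) = g.
Proof. by rewrite (ax_idr (sax C)). Qed.

Lemma pull_proof X Y Z (f : chom C Y Z) (b : chom C X Y) (g : chom C X Z)
  (e : ccomp f b = g) : ccomp (cid Z) (ccomp f b) = g.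
Proof. by rewrite (ax_idl (sax C)). Qed.

(* a_* = D(1,a), followed by the identification D_{a f} = D_g given e. *)
Definition pushE X Y Z (f : chom C X Y) (a : chom C Y Z) (g : chom C X Z)
  (e : ccomp a f = g) : ns D f -> ns D g :=
  nact D (push_proof e).
(* b^* = D(b,1), followed by the identification D_{f b} = D_g given e. *)
Definition pullE X Y Z (f : chom C Y Z) (b : chom C X Y) (g : chom C X Z)
  (e : ccomp f b = g) : ns D f -> ns D g :=
  nact D (pull_proof e).

Definition push X Y Z (a : chom C Y Z) (f : chom C X Y) (x : ns D f)
  : ns D (ccomp a f) := pushE (erefl (ccomp a f)) x.
Definition pull X Y Z (b : chom C X Y) (f : chom C Y Z) (x : ns D f)
  : ns D (ccomp f b) := pullE (erefl (ccomp f b)) x.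

(* D is cartesian: D_f = 0 for f : X -> 1, and for f : X -> Y1 x Y2 the *)
(* map xi |-> (pi1_* xi, pi2_* xi) is an isomorphism (bijective; it is   *)
(* additive by nact_add).                                                *)
Definition IsCartesian : Prop :=
  (forall X (f : chom C X BOne) (x : ns D f), x = 0) /\
  (forall X Y1 Y2 (f : chom C X (BProd Y1 Y2)),
     bijective (fun x : ns D f => (push (cpr1 Y1 Y2) x, push (cpr2 Y1 Y2) x))).

(* phiRel g xi eta zeta  <->  zeta = phi_g(xi, eta), i.e. zeta in D_{g x 1} *)
(* is the element whose cartesian components are (pi1^* xi, eta).          *)
Definition phiRel X W (Y : BiMag S) (g : chom C X W) (xi : ns D g)
  (eta : ns D (cpr2 X Y)) (zeta : ns D (ctimes1 Y g)) : Prop :=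
  pushE (ax_pr1 (sax C) (ccomp g (cpr1 X Y)) (cpr2 X Y)) zeta
    = pull (cpr1 X Y) xi /\
  pushE (ax_pr2 (sax C) (ccomp g (cpr1 X Y)) (cpr2 X Y)) zeta = eta.

(* Cartesian closed: moreover, for f : X x Y -> Z, the map                *)
(* D_{lambda f} -> D_f, xi |-> ev_* phi_{lambda f}(xi, 0) is bijective.   *)
Definition IsCartClosed : Prop :=
  IsCartesian /\
  forall X Y Z (f : chom C (BProd X Y) Z) (Lam : ns D (ccur f) -> ns D f),
    (forall xi, exists zeta : ns D (ctimes1 Y (ccur f)),
        phiRel xi 0 zeta /\ pushE (ax_ev (sax C) f) zeta = Lam xi) ->
    bijective Lam.

End NatSysOps.

Section BW.
Variables (S : Type) (F C : SCCC S) (p : SCCCMor F C) (D : NatSys C).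

Definition C1 : Type := forall X Y (u : chom F X Y), ns D (fmap p u).

Definition C1add (phi psi : C1) : C1 := fun X Y u => phi X Y u + psi X Y u.

Lemma pcomp_eq X Y Z (l1 : chom F Y Z) (l2 : chom F X Y) :
  ccomp (fmap p l1) (fmap p l2) = fmap p (ccomp l1 l2).
Proof. by rewrite (fmap_comp p). Qed.

Definition IsCocycle (phi : C1) : Prop :=
  forall X Y Z (l1 : chom F Y Z) (l2 : chom F X Y),
    pushE (pcomp_eq l1 l2) (phi X Y l2) - phi X Z (ccomp l1 l2)
      + pullE (pcomp_eq l1 l2) (phi Y Z l1) = 0.

Definition IsZtilde (I : Type) (Xs Ys : I -> BiMag S)
  (gens : forall i, chom F (Xs i) (Ys i)) (phi : C1) : Prop :=
  IsCocycle phi /\ forall i, phi _ _ (gens i) = 0.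

Lemma pair1_eq X Y Z (u : chom F X Y) (v : chom F X Z) :
  ccomp (cpr1 Y Z) (fmap p (cpair u v)) = fmap p u.
Proof. by rewrite (fmap_pair p) (ax_pr1 (sax C)). Qed.

Lemma pair2_eq X Y Z (u : chom F X Y) (v : chom F X Z) :
  ccomp (cpr2 Y Z) (fmap p (cpair u v)) = fmap p v.
Proof. by rewrite (fmap_pair p) (ax_pr2 (sax C)). Qed.

Lemma cur_eq X Y Z (u : chom F (BProd X Y) Z) :
  ccomp (cev Y Z) (ctimes1 Y (fmap p (ccur u))) = fmap p u.
Proof. by rewrite (fmap_cur p) (ax_ev (sax C)). Qed.

(* Der^{CCC_S}(F;D): a morphism s : F -> D x| C of S-sorted CCCs lifting *)
(* p is s(u) = (p(u), d(u)) with d in C^1; the conditions below say that  *)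
(* s preserves identities, composition (xi o eta = f_* eta + g^* xi), the *)
(* specified 1, projections, evaluations (zero elements), pairing and     *)
(* currying of the trivial extension D x| C.                              *)
Record IsDer (d : C1) : Prop := {
  der_id : forall X, d X X (cid X) = 0;
  der_comp : forall X Y Z (l1 : chom F Y Z) (l2 : chom F X Y),
      d X Z (ccomp l1 l2)
        = pushE (pcomp_eq l1 l2) (d X Y l2) + pullE (pcomp_eq l1 l2) (d Y Z l1);
  der_bang : forall X, d X BOne (cbang X) = 0;
  der_pr1 : forall X Y, d _ _ (cpr1 X Y) = 0;
  der_pr2 : forall X Y, d _ _ (cpr2 X Y) = 0;
  der_ev : forall Y Z, d _ _ (cev Y Z) = 0;
  der_pair : forall X Y Z (u : chom F X Y) (v : chom F X Z),
      pushE (pair1_eq u v) (d _ _ (cpair u v)) = d _ _ u /\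
      pushE (pair2_eq u v) (d _ _ (cpair u v)) = d _ _ v;
  der_cur : forall X Y Z (u : chom F (BProd X Y) Z),
      exists zeta : ns D (ctimes1 Y (fmap p (ccur u))),
        phiRel (d _ _ (ccur u)) 0 zeta /\
        pushE (cur_eq u) zeta = d _ _ u }.

End BW.

Definition IsoSumOf (T : Type) (add : T -> T -> T) (P Q R : T -> Prop) : Prop :=
  exists Phi : T -> T -> T,
    [/\ forall a b, P a -> Q b -> R (Phi a b),
        forall a b a' b', P a -> Q b -> P a' -> Q b' ->
          Phi (add a a') (add b b') = add (Phi a b) (Phi a' b'),
        forall a b a' b', P a -> Q b -> P a' -> Q b' ->
          Phi a b = Phi a' b' -> a = a' /\ b = b'
      & forall z, R z -> exists a b, [/\ P a, Q b & Phi a b = z]].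

(* Main.v *)
From HB Require Import structures.
From mathcomp Require Import all_boot all_algebra.
From Stdlib Require Import ProofIrrelevance ClassicalEpsilon FunctionalExtensionality.
Require Import Defs.
Set Implicit Arguments.
Unset Strict Implicit.
Unset Printing Implicit Defensive.
Import GRing.Theory.
Local Open Scope ring_scope.


Section Tools.
Variables (S : Type) (C : SCCC S) (D : NatSys C).

Lemma cassoc X Y Z W (h : chom C Z W) (g : chom C Y Z) (f : chom C X Y) :
  ccomp h (ccomp g f) = ccomp (ccomp h g) f.
Proof. exact: (ax_assoc (sax C)). Qed.
Lemma cidl X Y (f : chom C X Y) : ccomp (cid Y) f = f.
Proof. exact: (ax_idl (sax C)). Qed.
Lemma cidr X Y (f : chom C X Y) : ccomp f (cid X) = f.
Proof. exact: (ax_idr (sax C)). Qed.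

Lemma nact_irr X Y X' Y' (f : chom C X Y) (g : chom C X' Y')
  (a a' : chom C X' X) (b b' : chom C Y Y')
  (H : ccomp b (ccomp f a) = g) (H' : ccomp b' (ccomp f a') = g) (x : ns D f) :
  a = a' -> b = b' -> nact D H x = nact D H' x.
Proof. move=> ea eb; subst a' b'; by rewrite (proof_irrelevance _ H H'). Qed.

Lemma cc_proof X Y X' Y' X'' Y'' (f : chom C X Y) (g : chom C X' Y')
  (h : chom C X'' Y'') (a : chom C X' X) (b : chom C Y Y')
  (a' : chom C X'' X') (b' : chom C Y' Y'')
  (H1 : ccomp b (ccomp f a) = g) (H2 : ccomp b' (ccomp g a') = h) :
  ccomp (ccomp b' b) (ccomp f (ccomp a a')) = h.
Proof. by rewrite -H2 -H1 !cassoc. Qed.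

Lemma nact_cc X Y X' Y' X'' Y'' (f : chom C X Y) (g : chom C X' Y')
  (h : chom C X'' Y'') (a : chom C X' X) (b : chom C Y Y')
  (a' : chom C X'' X') (b' : chom C Y' Y'')
  (H1 : ccomp b (ccomp f a) = g) (H2 : ccomp b' (ccomp g a') = h) x :
  nact D H2 (nact D H1 x) = nact D (cc_proof H1 H2) x.
Proof. exact: nact_comp. Qed.

Lemma nact0 X Y X' Y' (f : chom C X Y) (g : chom C X' Y')
  (a : chom C X' X) (b : chom C Y Y') (H : ccomp b (ccomp f a) = g) :
  nact D H 0 = 0.
Proof.
have E := nact_add H (0 : ns D f) 0.
apply: (addrI (nact D H 0)); rewrite addr0 -E. by rewrite addr0.
Qed.

Lemma nactN X Y X' Y' (f : chom C X Y) (g : chom C X' Y')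
  (a : chom C X' X) (b : chom C Y Y') (H : ccomp b (ccomp f a) = g) x :
  nact D H (- x) = - nact D H x.
Proof.
apply: (addrI (nact D H x)); by rewrite -nact_add !subrr nact0.
Qed.

Lemma tr_proof X Y (f g : chom C X Y) (E : f = g) :
  ccomp (cid Y) (ccomp f (cid X)) = g.
Proof. by rewrite cidl cidr. Qed.

Definition tr X Y (f g : chom C X Y) (E : f = g) : ns D f -> ns D g :=
  nact D (tr_proof E).

Ltac nnorm := rewrite ?/tr ?/push ?/pull ?/pushE ?/pullE;
  repeat progress (rewrite ?nact_add ?nactN ?nact0 ?nact_cc).
Ltac nfin := apply: nact_irr; rewrite ?cidl ?cidr ?cassoc //.

Lemma tr_id X Y (f : chom C X Y) (E : f = f) x : tr E x = x.
Proof. exact: nact_id. Qed.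
Lemma tr_irr X Y (f g : chom C X Y) (E E' : f = g) x : tr E x = tr E' x.
Proof. by rewrite (proof_irrelevance _ E E'). Qed.
Lemma tr_tr X Y (f g h : chom C X Y) (E1 : f = g) (E2 : g = h) x :
  tr E2 (tr E1 x) = tr (etrans E1 E2) x.
Proof. nnorm; nfin. Qed.
Lemma tr_add X Y (f g : chom C X Y) (E : f = g) x y : tr E (x + y) = tr E x + tr E y.
Proof. exact: nact_add. Qed.
Lemma tr0 X Y (f g : chom C X Y) (E : f = g) : tr E 0 = 0.
Proof. exact: nact0. Qed.
Lemma tr_inj X Y (f g : chom C X Y) (E : f = g) x y : tr E x = tr E y -> x = y.
Proof. move=> h; have := congr1 (tr (esym E)) h; by rewrite !tr_tr !tr_id. Qed.
Lemma tr_move X Y (f g : chom C X Y) (E : f = g) x y : tr E x = y -> x = tr (esym E) y.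
Proof. move=> <-; by rewrite tr_tr tr_id. Qed.

Lemma pushE_tr X Y Z (f : chom C X Y) (a : chom C Y Z) (g : chom C X Z)
  (e : ccomp a f = g) x : pushE e x = tr e (push a x).
Proof. nnorm; nfin. Qed.
Lemma pullE_tr X Y Z (f : chom C Y Z) (b : chom C X Y) (g : chom C X Z)
  (e : ccomp f b = g) x : pullE e x = tr e (pull b x).
Proof. nnorm; nfin. Qed.
Lemma push_tr X Y Z (a : chom C Y Z) (f g : chom C X Y) (E : f = g) x :
  push a (tr E x) = tr (f_equal (ccomp a) E) (push a x).
Proof. nnorm; nfin. Qed.
Lemma pull_tr X Y Z (b : chom C X Y) (f g : chom C Y Z) (E : f = g) x :
  pull b (tr E x) = tr (f_equal (fun k => ccomp k b) E) (pull b x).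
Proof. nnorm; nfin. Qed.

End Tools.



Ltac nnorm := rewrite ?/tr ?/push ?/pull ?/pushE ?/pullE;
  repeat progress (rewrite ?nact_add ?nactN ?nact0 ?nact_cc).
Ltac nfin := apply: nact_irr; rewrite ?cidl ?cidr ?cassoc //.

Section Cart.
Variables (S : Type) (C : SCCC S) (D : NatSys C) (HD : IsCartClosed D).

Lemma ns_one X (f : chom C X BOne) (x : ns D f) : x = 0.
Proof. exact: HD.1.1. Qed.

Lemma bij_ex X Y1 Y2 (h : chom C X (BProd Y1 Y2)) :
  exists g : ns D (ccomp (cpr1 Y1 Y2) h) * ns D (ccomp (cpr2 Y1 Y2) h) -> ns D h,
    cancel (fun x : ns D h => (push (cpr1 Y1 Y2) x, push (cpr2 Y1 Y2) x)) g /\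
    cancel g (fun x : ns D h => (push (cpr1 Y1 Y2) x, push (cpr2 Y1 Y2) x)).
Proof. case: (HD.1.2 _ _ _ h) => g K1 K2; by exists g. Qed.

Definition cinv X Y1 Y2 (h : chom C X (BProd Y1 Y2)) :=
  proj1_sig (constructive_indefinite_description _ (bij_ex h)).
Arguments cinv [X Y1 Y2] h.

Lemma cinv_spec X Y1 Y2 (h : chom C X (BProd Y1 Y2)) :
  cancel (fun x : ns D h => (push (cpr1 Y1 Y2) x, push (cpr2 Y1 Y2) x)) (cinv h) /\
  cancel (cinv h) (fun x : ns D h => (push (cpr1 Y1 Y2) x, push (cpr2 Y1 Y2) x)).
Proof. exact: (proj2_sig (constructive_indefinite_description _ (bij_ex h))). Qed.

Lemma cinv1 X Y1 Y2 (h : chom C X (BProd Y1 Y2)) a b :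
  push (cpr1 Y1 Y2) (cinv h (a, b)) = a.
Proof. by have := (cinv_spec h).2 (a, b) => -[]. Qed.
Lemma cinv2 X Y1 Y2 (h : chom C X (BProd Y1 Y2)) a b :
  push (cpr2 Y1 Y2) (cinv h (a, b)) = b.
Proof. by have := (cinv_spec h).2 (a, b) => -[]. Qed.
Lemma cart_inj X Y1 Y2 (h : chom C X (BProd Y1 Y2)) (x y : ns D h) :
  push (cpr1 Y1 Y2) x = push (cpr1 Y1 Y2) y ->
  push (cpr2 Y1 Y2) x = push (cpr2 Y1 Y2) y -> x = y.
Proof.
move=> e1 e2; rewrite -((cinv_spec h).1 x) -((cinv_spec h).1 y) /=.
by rewrite e1 e2.
Qed.

Definition zeta X W Y (g : chom C X W) (xi : ns D g) : ns D (ctimes1 Y g) :=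
  cinv (ctimes1 Y g)
    (tr (esym (ax_pr1 (sax C) (ccomp g (cpr1 X Y)) (cpr2 X Y))) (pull (cpr1 X Y) xi), 0).

Lemma phiRel_zeta X W Y (g : chom C X W) (xi : ns D g) :
  phiRel xi 0 (zeta Y xi).
Proof.
split; rewrite pushE_tr /zeta ?cinv1 ?cinv2 ?tr_tr ?tr_id ?tr0 //.
Qed.

Lemma phiRel_uniq X W Y (g : chom C X W) (xi : ns D g) eta z z' :
  phiRel (Y := Y) xi eta z -> phiRel xi eta z' -> z = z'.
Proof.
rewrite /phiRel !pushE_tr => -[e1 e2] [e1' e2'].
apply: cart_inj.
  by move: e1; rewrite -e1' => /tr_inj.
by move: e2; rewrite -e2' => /tr_inj.
Qed.

Lemma zeta_tr X W Y (g g' : chom C X W) (E : g = g') (xi : ns D g) :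
  zeta Y (tr E xi) = tr (f_equal (ctimes1 Y) E) (zeta Y xi).
Proof. subst g'; by rewrite !tr_id. Qed.

Definition Lam X Y Z (f : chom C (BProd X Y) Z) (xi : ns D (ccur f)) : ns D f :=
  pushE (ax_ev (sax C) f) (zeta Y xi).
Arguments Lam [X Y Z] f.

Lemma Lam_bij X Y Z (f : chom C (BProd X Y) Z) : bijective (Lam f).
Proof.
apply: HD.2 => xi; exists (zeta Y xi); split; [exact: phiRel_zeta | by []].
Qed.

Lemma Lam_ex X Y Z (f : chom C (BProd X Y) Z) :
  exists g, cancel (Lam f) g /\ cancel g (Lam f).
Proof. case: (Lam_bij f) => g K1 K2; by exists g. Qed.

Definition Linv X Y Z (f : chom C (BProd X Y) Z) :=
  proj1_sig (constructive_indefinite_description _ (Lam_ex f)).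
Arguments Linv [X Y Z] f.

Lemma Lam_Linv X Y Z (f : chom C (BProd X Y) Z) x : Lam f (Linv f x) = x.
Proof. exact: (proj2_sig (constructive_indefinite_description _ (Lam_ex f))).2. Qed.
Lemma Lam_inj X Y Z (f : chom C (BProd X Y) Z) x y : Lam f x = Lam f y -> x = y.
Proof.
move=> e; have K := (proj2_sig (constructive_indefinite_description _ (Lam_ex f))).1.
by rewrite -(K x) -(K y) e.
Qed.

End Cart.




Section Triv.
Variables (S : Type) (C : SCCC S) (D : NatSys C) (HD : IsCartClosed D).

Lemma push0 X Y Z (a : chom C Y Z) (f : chom C X Y) : push (D:=D) a (0 : ns D f) = 0.
Proof. exact: nact0. Qed.
Lemma pull0 X Y Z (b : chom C X Y) (f : chom C Y Z) : pull (D:=D) b (0 : ns D f) = 0.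
Proof. exact: nact0. Qed.

Definition Th X Y := {f : chom C X Y & ns D f}.

Definition mkT X Y (f : chom C X Y) (x : ns D f) : Th X Y := existT _ f x.
Arguments mkT [X Y] f x.

Definition Tdata : SCCCData S := {|
  chom := Th;
  cid := fun X => mkT (cid X) 0;
  ccomp := fun X Y Z (g : Th Y Z) (f : Th X Y) =>
    mkT (ccomp (projT1 g) (projT1 f))
      (push (projT1 g) (projT2 f) + pull (projT1 f) (projT2 g));
  cbang := fun X => mkT (cbang X) 0;
  cpr1 := fun X Y => mkT (cpr1 X Y) 0;
  cpr2 := fun X Y => mkT (cpr2 X Y) 0;
  cpair := fun X Y Z (f : Th X Y) (g : Th X Z) =>
    mkT (cpair (projT1 f) (projT1 g))
      (cinv HD (h := cpair (projT1 f) (projT1 g))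
         (tr (esym (ax_pr1 (sax C) (projT1 f) (projT1 g))) (projT2 f),
          tr (esym (ax_pr2 (sax C) (projT1 f) (projT1 g))) (projT2 g)));
  cev := fun Y Z => mkT (cev Y Z) 0;
  ccur := fun X Y Z (f : Th (BProd X Y) Z) =>
    mkT (ccur (projT1 f)) (Linv HD (f := projT1 f) (projT2 f)) |}.

Lemma teq X Y (f g : chom C X Y) (s : ns D f) (t : ns D g) (E : f = g) :
  tr E s = t -> mkT f s = mkT g t.
Proof. subst g; by rewrite tr_id => ->. Qed.

Lemma tr_moveR X Y (f g : chom C X Y) (E : f = g) (x : ns D f) y :
  x = tr (esym E) y -> tr E x = y.
Proof. move=> ->; by rewrite tr_tr tr_id. Qed.

Lemma nact_idE X Y (f : chom C X Y) (a : chom C X X) (b : chom C Y Y)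
  (H : ccomp b (ccomp f a) = f) x : a = cid X -> b = cid Y -> nact D H x = x.
Proof. move=> ea eb; rewrite (nact_irr H (tr_proof (erefl f))) //; exact: tr_id. Qed.

Lemma Tax : SCCCAxioms Tdata.
Proof.
split.
- move=> X Y Z W [h xh] [g xg] [f xf] /=.
  apply: (teq (E := cassoc h g f)); nnorm; rewrite addrA; congr (_ + _ + _); nfin.
- move=> X Y [f xf] /=; apply: (teq (E := cidl f)); rewrite pull0 addr0; nnorm.
  apply: nact_idE; by rewrite ?cidl ?cidr.
- move=> X Y [f xf] /=; apply: (teq (E := cidr f)); rewrite push0 add0r; nnorm.
  apply: nact_idE; by rewrite ?cidl ?cidr.
- move=> X [f xf] /=; apply: (teq (E := ax_bang (sax C) f)); exact: ns_one.
- move=> X Y Z [f xf] [g xg] /=; apply: (teq (E := ax_pr1 (sax C) f g)).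
  by rewrite pull0 addr0 cinv1 tr_tr tr_id.
- move=> X Y Z [f xf] [g xg] /=; apply: (teq (E := ax_pr2 (sax C) f g)).
  by rewrite pull0 addr0 cinv2 tr_tr tr_id.
- move=> X Y Z [k xk] /=; apply: (teq (E := ax_pair_eta (sax C) k)).
  apply: (cart_inj HD).
    by rewrite push_tr cinv1 pull0 addr0 !tr_tr tr_id.
  by rewrite push_tr cinv2 pull0 addr0 !tr_tr tr_id.
- move=> X Y Z [f xf]; rewrite /ctimes1 /=; apply: (teq (E := ax_ev (sax C) f)).
  rewrite push0 add0r tr0 pull0 addr0.
  rewrite -{2}(Lam_Linv HD (f := f) xf) /Lam /zeta pushE_tr.
  apply: tr_irr.
- move=> X Y Z [k xk]; rewrite /ctimes1 /=; apply: (teq (E := ax_cur_eta (sax C) k)).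
  rewrite push0 add0r tr0 pull0 addr0.
  set u := ccomp (cev Y Z) _.
  apply: tr_moveR.
  apply: (@Lam_inj _ _ _ HD _ _ _ u); rewrite Lam_Linv /Lam zeta_tr /zeta.
  nnorm; nfin.
Qed.

Definition T : SCCC S := Build_SCCC Tax.

End Triv.




Arguments mkT {S C D X Y} f x.

Section Main.
Variables (S : Type) (F C : SCCC S) (I : Type) (Xs Ys : I -> BiMag S)
  (gens : forall i, chom F (Xs i) (Ys i)) (Hfree : IsFreeOn gens)
  (p : SCCCMor F C) (D : NatSys C) (HD : IsCartClosed D).

Local Notation TT := (T HD).

Lemma sig_tr X Y (s s' : chom TT X Y) (E : s = s') (K : projT1 s = projT1 s') :
  tr K (projT2 s) = projT2 s'.
Proof. destruct E; exact: tr_id. Qed.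

Lemma mkT_inj X Y (f : chom C X Y) (x y : ns D f) :
  mkT (D := D) f x = mkT f y -> x = y.
Proof. move=> E; have := sig_tr E (erefl f); by rewrite tr_id. Qed.

Section SDer.
Variables (d : C1 p D) (Hd : IsDer d).


Definition sder : SCCCMor F TT.
refine (@Build_SCCCMor _ F TT (fun X Y u => mkT (fmap p u) (@d X Y u)) _ _ _ _ _ _ _ _).
- move=> X; apply: (teq (E := fmap_id p X)); by rewrite (der_id Hd) tr0.
- move=> X Y Z g f; apply: (teq (E := fmap_comp p g f)); rewrite (der_comp Hd).
  nnorm; congr (_ + _); apply: nact_irr; by rewrite ?cidl ?cidr.
- move=> X; apply: (teq (E := fmap_bang p X)); by rewrite (der_bang Hd) tr0.
- move=> X Y; apply: (teq (E := fmap_pr1 p X Y)); by rewrite (der_pr1 Hd) tr0.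
- move=> X Y; apply: (teq (E := fmap_pr2 p X Y)); by rewrite (der_pr2 Hd) tr0.
- move=> X Y; apply: (teq (E := fmap_ev p X Y)); by rewrite (der_ev Hd) tr0.
- move=> X Y Z f g; apply: (teq (E := fmap_pair p f g)).
  case: (der_pair Hd f g) => h1 h2.
  apply: (cart_inj HD).
    rewrite push_tr cinv1 -h1 pushE_tr tr_tr; apply: tr_irr.
  rewrite push_tr cinv2 -h2 pushE_tr tr_tr; apply: tr_irr.
- move=> X Y Z f; apply: (teq (E := fmap_cur p f)).
  apply: (@Lam_inj _ _ _ HD _ _ _ (fmap p f)); rewrite Lam_Linv.
  case: (der_cur Hd f) => z [hz1 hz2].
  rewrite -hz2.
  have -> : z = zeta HD Y (@d _ _ (ccur f)) by apply: (phiRel_uniq HD hz1); apply: phiRel_zeta.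
  rewrite /Lam zeta_tr !pushE_tr push_tr tr_tr; apply: tr_irr.
Defined.

End SDer.

Definition proj : SCCCMor TT C.
refine (@Build_SCCCMor _ TT C (fun X Y s => projT1 s) _ _ _ _ _ _ _ _); by [].
Defined.

Definition mcomp (G : SCCC S) (H2 : SCCCMor G C) (H1 : SCCCMor F G) : SCCCMor F C.
refine (@Build_SCCCMor _ F C (fun X Y u => fmap H2 (fmap H1 u)) _ _ _ _ _ _ _ _).
all: by move=> *; rewrite ?fmap_id ?fmap_comp ?fmap_bang ?fmap_pr1 ?fmap_pr2 ?fmap_ev
  ?fmap_pair ?fmap_cur.
Defined.

Lemma free_uniq (G : SCCC S) (H1 H2 : SCCCMor F G) :
  (forall i, fmap H1 (gens i) = fmap H2 (gens i)) ->
  forall X Y (u : chom F X Y), fmap H1 u = fmap H2 u.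
Proof.
move=> E X Y u.
case: (Hfree (fun i => fmap H1 (gens i))) => H0 [_ U].
by rewrite (U H1 (fun _ => erefl)) (U H2 (fun i => esym (E i))).
Qed.

Lemma der_uniq (d1 d2 : C1 p D) : IsDer d1 -> IsDer d2 ->
  (forall i, d1 _ _ (gens i) = d2 _ _ (gens i)) ->
  forall X Y (u : chom F X Y), d1 X Y u = d2 X Y u.
Proof.
move=> H1 H2 E X Y u; apply: mkT_inj.
apply: (free_uniq (H1 := sder H1) (H2 := sder H2)) => i /=; by rewrite E.
Qed.

Section Ext.
Variables (H : SCCCMor F TT)
  (Ep : forall X Y (u : chom F X Y), projT1 (fmap H u) = fmap p u).

Definition dd : C1 p D := fun X Y u => tr (Ep u) (projT2 (fmap H u)).

Lemma dEq X Y (u : chom F X Y) (s' : chom TT X Y) (E : fmap H u = s')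
  (K : projT1 s' = fmap p u) : dd u = tr K (projT2 s').
Proof. rewrite /dd; subst s'; apply: tr_irr. Qed.

Lemma dd_der : IsDer dd.
Proof.
split.
- move=> X; by rewrite (dEq (fmap_id H X) (esym (fmap_id p X))) /= tr0.
- move=> X Y Z l1 l2.
  have K : ccomp (projT1 (fmap H l1)) (projT1 (fmap H l2)) = fmap p (ccomp l1 l2).
    by rewrite !Ep fmap_comp.
  rewrite (dEq (fmap_comp H l1 l2) K) /dd /=.
  nnorm; congr (_ + _); apply: nact_irr; by rewrite ?Ep ?cidl ?cidr.
- move=> X; by rewrite (dEq (fmap_bang H X) (esym (fmap_bang p X))) /= tr0.
- move=> X Y; by rewrite (dEq (fmap_pr1 H X Y) (esym (fmap_pr1 p X Y))) /= tr0.
- move=> X Y; by rewrite (dEq (fmap_pr2 H X Y) (esym (fmap_pr2 p X Y))) /= tr0.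
- move=> X Y; by rewrite (dEq (fmap_ev H X Y) (esym (fmap_ev p X Y))) /= tr0.
- move=> X Y Z u v.
  have K : cpair (projT1 (fmap H u)) (projT1 (fmap H v)) = fmap p (cpair u v).
    by rewrite !Ep fmap_pair.
  rewrite (dEq (fmap_pair H u v) K) /=.
  split.
    rewrite pushE_tr push_tr cinv1 !tr_tr /dd; apply: tr_irr.
  rewrite pushE_tr push_tr cinv2 !tr_tr /dd; apply: tr_irr.
- move=> X Y Z u.
  exists (zeta HD Y (dd (ccur u))); split; first exact: phiRel_zeta.
  have K : ccur (projT1 (fmap H u)) = fmap p (ccur u).
    by rewrite !Ep fmap_cur.
  rewrite (dEq (fmap_cur H u) K) /=.
  transitivity (tr (Ep u) (Lam HD (Linv HD (projT2 (fmap H u))))); last first.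
    by rewrite Lam_Linv.
  rewrite /Lam zeta_tr !pushE_tr push_tr !tr_tr; apply: tr_irr.
Qed.

End Ext.

End Main.



Section Coc.
Variables (S : Type) (F C : SCCC S) (p : SCCCMor F C) (D : NatSys C).

Definition C1opp (phi : C1 p D) : C1 p D := fun X Y u => - phi X Y u.

Lemma der_cocycle (d : C1 p D) : IsDer d -> IsCocycle d.
Proof.
move=> Hd X Y Z l1 l2; rewrite (der_comp Hd).
by rewrite opprD addrA subrr add0r addNr.
Qed.

Lemma zrearr (V : zmodType) (a b c d e f : V) :
  a + b - (c + d) + (e + f) = (a - c + e) + (b - d + f).
Proof. by rewrite opprD (addrACA a b) (addrACA (a - c) (b - d) e f). Qed.

Lemma cocycle_add (phi psi : C1 p D) :
  IsCocycle phi -> IsCocycle psi -> IsCocycle (C1add phi psi).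
Proof.
move=> h1 h2 X Y Z l1 l2; rewrite /C1add /pushE /pullE !nact_add zrearr.
have e1 := h1 X Y Z l1 l2; have e2 := h2 X Y Z l1 l2.
rewrite /pushE /pullE in e1 e2; by rewrite e1 e2 addr0.
Qed.

Lemma cocycle_opp (phi : C1 p D) : IsCocycle phi -> IsCocycle (C1opp phi).
Proof.
move=> h1 X Y Z l1 l2; rewrite /C1opp /pushE /pullE !nactN.
have e1 := h1 X Y Z l1 l2; rewrite /pushE /pullE in e1.
by apply: oppr_inj; rewrite oppr0 !opprD !opprK.
Qed.

End Coc.

Ltac funext3 := apply: functional_extensionality_dep => ?;
  apply: functional_extensionality_dep => ?; apply: functional_extensionality_dep => ?.

Theorem mainTheorem6 (S : Type) (F C : SCCC S) (I : Type) (Xs Ys : I -> BiMag S)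
  (gens : forall i, chom F (Xs i) (Ys i)) (Hfree : IsFreeOn gens)
  (p : SCCCMor F C) (D : NatSys C) (HD : IsCartClosed D) :
  IsoSumOf (@C1add S F C p D)
    (IsZtilde (p := p) (D := D) gens) (IsDer (p := p) (D := D))
    (IsCocycle (p := p) (D := D)).
Proof.
exists (@C1add S F C p D); split.
- move=> a b [Ca _] Db; exact: (cocycle_add Ca (der_cocycle Db)).
- move=> a b a' b' _ _ _ _; funext3; by rewrite /C1add addrACA.
- move=> a b a' b' [Ca Ga] Db [Ca' Ga'] Db' E.
  have Eb : forall X Y u, b X Y u = b' X Y u.
    apply: (der_uniq Hfree HD Db Db') => i.
    have := f_equal (fun phi : C1 p D => phi _ _ (gens i)) E.
    by rewrite /C1add Ga Ga' !add0r.
  have Ea : forall X Y u, a X Y u = a' X Y u.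
    move=> X Y u; have := f_equal (fun phi : C1 p D => phi X Y u) E.
    by rewrite /C1add Eb => /addIr.
  by split; funext3; rewrite ?Ea ?Eb.
- move=> z Cz.
  case: (Hfree (T HD) (fun i => mkT (fmap p (gens i)) (z _ _ (gens i)))) => H [Hg _].
  have Ep : forall X Y (u : chom F X Y), projT1 (fmap H u) = fmap p u.
    have U := @free_uniq _ _ _ _ _ _ Hfree C (mcomp (proj HD) H) p.
    have U' : forall i, fmap (mcomp (proj HD) H) (gens i) = fmap p (gens i).
      by move=> i; rewrite /= Hg.
    move=> X Y u; exact: (U U' X Y u).
  have Dd := dd_der Ep.
  have Gd : forall i, dd Ep (gens i) = z _ _ (gens i).
    move=> i; by rewrite (dEq Ep (Hg i) (erefl _)) /= tr_id.
  exists (C1add z (C1opp (fun X Y u => dd Ep u))), (fun X Y u => dd Ep u).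
  split => //.
  + split; first exact: (cocycle_add Cz (cocycle_opp (der_cocycle Dd))).
    by move=> i; rewrite /C1add /C1opp Gd subrr.
  + funext3; by rewrite /C1add /C1opp subrK.
Qed.
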